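(* Let $E$ be a Banach $f$-algebra and let $(x_\alpha)_{\alpha\in A}$ and $(y_\beta)_{\beta\in A}$ be nets in $E$ such that $x_\alpha\xrightarrow{mw}x$ and $y_\beta\xrightarrow{mw}y$ for some $x,y\in E$, and such that $(x_\alpha)$ or $(y_\beta)$ is monotone. Then $x_\alpha y_\beta\xrightarrow{mw}xy$ (as a net indexed by $(\alpha,\beta)\in A\times A$).
   Context: All vector lattices are real and Archimedean. An $f$-algebra is a vector lattice with an associative multiplication making it an algebra, such that products of positive elements are positive and $x\wedge y=0$ implies $(xz)\wedge y=(zx)\wedge y=0$ for all $z\ge0$. A Banach $f$-algebra is an $f$-algebra which is a Banach lattice with $\|xy\|\le\|x\|\|y\|$. A net $(x_\alpha)$ in $E$ $mw$-converges to $x$ ($x_\alpha\xrightarrow{mw}x$) if $|x_\alpha-x|u\to0$ weakly for every $u\in E_+$. A net is monotone if it is increasing or decreasing. *)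

(* Defs.v *)
From HB Require Import structures.
From mathcomp Require Import all_boot all_order all_algebra.
From mathcomp Require Import all_classical all_reals all_analysis.
Set Implicit Arguments. Unset Strict Implicit. Unset Printing Implicit Defensive.
Import Order.TTheory GRing.Theory Num.Theory.
Import numFieldNormedType.Exports.
Local Open Scope ring_scope.

Definition directed_set (A : Type) (leA : A -> A -> Prop) : Prop :=
  [/\ inhabited A,
      (forall a, leA a a),
      (forall a b c, leA a b -> leA b c -> leA a c) &
      (forall a b, exists c, leA a c /\ leA b c)].

Definition prod_le (A B : Type) (leA : A -> A -> Prop) (leB : B -> B -> Prop)
  (p q : A * B) : Prop := leA p.1 q.1 /\ leB p.2 q.2.

Definition net_cvg_R (R : realType) (A : Type) (leA : A -> A -> Prop)
  (t : A -> R) (l : R) : Prop :=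
  forall eps : R, 0 < eps ->
    exists a0 : A, forall a, leA a0 a -> `|t a - l| < eps.

Section BFA.
Context {R : realType} {E : completeNormedModType R}.
Variables (le : E -> E -> Prop) (join meet : E -> E -> E) (mul : E -> E -> E).

Definition labs (x : E) : E := join x (- x).

Definition vector_lattice : Prop :=
  (forall x, le x x) /\
  (forall x y, le x y -> le y x -> x = y) /\
  (forall x y z, le x y -> le y z -> le x z) /\
  (forall x y z, le x y -> le (x + z) (y + z)) /\
  (forall (a : R) x y, 0 <= a -> le x y -> le (a *: x) (a *: y)) /\
  (forall x y, le x (join x y) /\ le y (join x y) /\
               (forall z, le x z -> le y z -> le (join x y) z)) /\
  (forall x y, le (meet x y) x /\ le (meet x y) y /\
               (forall z, le z x -> le z y -> le z (meet x y))) /\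
  (forall x y, (forall n : nat, le (n%:R *: x) y) -> le x 0).

Definition banach_lattice : Prop :=
  vector_lattice /\
  (forall x y, le (labs x) (labs y) -> `|x| <= `|y|).

Definition algebra_mul : Prop :=
  [/\ (forall x y z, mul (mul x y) z = mul x (mul y z)),
      (forall x y z, mul (x + y) z = mul x z + mul y z),
      (forall x y z, mul x (y + z) = mul x y + mul x z),
      (forall (a : R) x y, mul (a *: x) y = a *: mul x y) &
      (forall (a : R) x y, mul x (a *: y) = a *: mul x y)].

Definition f_algebra : Prop :=
  [/\ vector_lattice, algebra_mul,
      (forall x y, le 0 x -> le 0 y -> le 0 (mul x y)) &
      (forall x y z, meet x y = 0 -> le 0 z ->
         meet (mul x z) y = 0 /\ meet (mul z x) y = 0)].

Definition banach_f_algebra : Prop :=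
  [/\ banach_lattice, f_algebra &
      (forall x y, `|mul x y| <= `|x| * `|y|)].

Definition cont_lin_functional (f : E -> R) : Prop :=
  (forall (a : R) x y, f (a *: x + y) = a * f x + f y) /\ continuous f.

Definition weak_cvg (A : Type) (leA : A -> A -> Prop) (z : A -> E) (l : E)
  : Prop :=
  forall f : E -> R, cont_lin_functional f ->
    net_cvg_R leA (fun a => f (z a)) (f l).

Definition mw_cvg (A : Type) (leA : A -> A -> Prop) (z : A -> E) (l : E)
  : Prop :=
  forall u, le 0 u -> weak_cvg leA (fun a => mul (labs (z a - l)) u) 0.

Definition net_increasing (A : Type) (leA : A -> A -> Prop) (z : A -> E) :=
  forall a b, leA a b -> le (z a) (z b).
Definition net_decreasing (A : Type) (leA : A -> A -> Prop) (z : A -> E) :=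
  forall a b, leA a b -> le (z b) (z a).
Definition net_monotone (A : Type) (leA : A -> A -> Prop) (z : A -> E) :=
  net_increasing leA z \/ net_decreasing leA z.

End BFA.

(* Main.v *)
Require Import Defs.
From HB Require Import structures.
From mathcomp Require Import all_boot all_order all_algebra.
From mathcomp Require Import all_classical all_reals all_analysis.
From mathcomp Require Import ring lra.
Import Order.TTheory GRing.Theory Num.Theory.
Import numFieldNormedType.Exports.
Local Open Scope ring_scope.

Section Main.
Context {R : realType} {E : completeNormedModType R}.
Variables (le : E -> E -> Prop) (join meet mul : E -> E -> E).
Hypothesis hE : banach_f_algebra le join meet mul.
Let hBL : banach_lattice le join meet. Proof. by case: hE. Qed.
Let hFA : f_algebra le join meet mul. Proof. by case: hE. Qed.
Let hVL : vector_lattice le join meet. Proof. by case: hBL. Qed.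
Let hAM : algebra_mul mul. Proof. by case: hFA. Qed.
Let hmul0 : forall x y, le 0 x -> le 0 y -> le 0 (mul x y). Proof. by case: hFA. Qed.
Let hnorm : forall x y, le (labs join x) (labs join y) -> `|x| <= `|y|. Proof. by case: hBL. Qed.
Let hmulnorm : forall x y, `|mul x y| <= `|x| * `|y|. Proof. by case: hE. Qed.

Lemma lrefl x : le x x. Proof. by case: hVL. Qed.
Lemma lanti x y : le x y -> le y x -> x = y.
Proof. by case: hVL => _ [+ _]; apply. Qed.
Lemma ltrans {x y z} : le x y -> le y z -> le x z.
Proof. by case: hVL => _ [_ [+ _]]; apply. Qed.
Lemma laddr {x y} z : le x y -> le (x + z) (y + z).
Proof. by case: hVL => _ [_ [_ [+ _]]]; apply. Qed.
Lemma lscale (a : R) {x y} : 0 <= a -> le x y -> le (a *: x) (a *: y).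
Proof. by case: hVL => _ [_ [_ [_ [+ _]]]]; apply. Qed.
Lemma joinP x y : le x (join x y) /\ le y (join x y) /\
               (forall z, le x z -> le y z -> le (join x y) z).
Proof. by have [_ [_ [_ [_ [_ [hj _]]]]]] := hVL; apply: hj. Qed.
Lemma meetP x y : le (meet x y) x /\ le (meet x y) y /\
               (forall z, le z x -> le z y -> le z (meet x y)).
Proof. by have [_ [_ [_ [_ [_ [_ [hm _]]]]]]] := hVL; apply: hm. Qed.
Lemma jub1 x y : le x (join x y). Proof. by case: (joinP x y). Qed.
Lemma jub2 x y : le y (join x y). Proof. by case: (joinP x y) => _ []. Qed.
Lemma jlub x y z : le x z -> le y z -> le (join x y) z.
Proof. by case: (joinP x y) => _ [] _; apply. Qed.
Lemma mlb1 x y : le (meet x y) x. Proof. by case: (meetP x y). Qed.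
Lemma mlb2 x y : le (meet x y) y. Proof. by case: (meetP x y) => _ []. Qed.
Lemma mglb x y z : le z x -> le z y -> le z (meet x y).
Proof. by case: (meetP x y) => _ [] _; apply. Qed.

Lemma laddl {x y} z : le x y -> le (z + x) (z + y).
Proof. by rewrite ![z + _]addrC; apply: laddr. Qed.
Lemma ladd2 {a b c d} : le a b -> le c d -> le (a + c) (b + d).
Proof. move=> h1 h2; apply: (ltrans (laddr c h1)); exact: laddl. Qed.
Lemma lsub0 {x y} : le x y -> le 0 (y - x).
Proof. by move=> /(laddr (- x)); rewrite subrr. Qed.
Lemma lsub0' {x y} : le 0 (y - x) -> le x y.
Proof. by move=> /(laddr x); rewrite add0r subrK. Qed.
Lemma lopp {x y} : le x y -> le (- y) (- x).
Proof.
move=> h; apply: lsub0'; rewrite opprK addrC; exact: lsub0.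
Qed.
Lemma joinC x y : join x y = join y x.
Proof. by apply: lanti; apply: jlub; rewrite ?jub1 ?jub2 //; [exact: jub2|exact: jub1|exact: jub2|exact: jub1]. Qed.
Lemma joinD x y z : join (x + z) (y + z) = join x y + z.
Proof.
apply: lanti.
  by apply: jlub; apply: laddr; [exact: jub1|exact: jub2].
have h : le (join x y) (join (x + z) (y + z) - z).
  by apply: jlub; apply: lsub0'; rewrite -addrA -opprD [z + _]addrC; apply: lsub0;
   [exact: jub1|exact: jub2].
by move/(laddr z): h; rewrite subrK.
Qed.
Lemma meetE x y : meet x y = - join (- x) (- y).
Proof.
apply: lanti.
  rewrite -[meet x y]opprK; apply: lopp; apply: jlub; apply: lopp;
   [exact: mlb1|exact: mlb2].
apply: mglb; rewrite -[X in le _ X]opprK; apply: lopp; [exact: jub1|exact: jub2].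
Qed.

Definition labs' := labs join.
Lemma labs_ub x : le x (labs join x). Proof. exact: jub1. Qed.
Lemma labs_ubN x : le (- x) (labs join x). Proof. exact: jub2. Qed.
Lemma ge0_half x : le 0 (x + x) -> le 0 x.
Proof.
move=> h; have h2 : 0 <= (2:R)^-1 by rewrite invr_ge0 ler0n.
have := lscale (2:R)^-1 h2 h.
by rewrite scaler0 -mulr2n -[x *+ 2](scaler_nat (R := R)) scalerA mulVf ?pnatr_eq0 // scale1r.
Qed.
Lemma labs_ge0 x : le 0 (labs join x).
Proof.
apply: ge0_half; have := ladd2 (labs_ub x) (labs_ubN x); by rewrite subrr.
Qed.
Lemma labs_tri p q : le (labs join (p + q)) (labs join p + labs join q).
Proof.
apply: jlub; first exact: ladd2 (labs_ub _) (labs_ub _).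
rewrite opprD; exact: ladd2 (labs_ubN _) (labs_ubN _).
Qed.
Lemma labsN x : labs join (- x) = labs join x.
Proof. by rewrite /labs opprK joinC. Qed.
Lemma labsB x y : labs join (x - y) = labs join (y - x).
Proof. by rewrite -labsN opprB. Qed.
Lemma labs_id x : le 0 x -> labs join x = x.
Proof.
move=> h; apply: lanti; last exact: labs_ub.
apply: jlub; first exact: lrefl.
apply: (ltrans (y := 0)); last by [].
by have := lopp h; rewrite oppr0.
Qed.
Lemma labs_le x z : le x z -> le (- x) z -> le (labs join x) z.
Proof. exact: jlub. Qed.

Definition posp x := join x 0.
Lemma posp_ge0 x : le 0 (posp x). Proof. exact: jub2. Qed.
Lemma posp_ub x : le x (posp x). Proof. exact: jub1. Qed.
Lemma posp_mono {x y} : le x y -> le (posp x) (posp y).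
Proof. move=> h; apply: jlub; [exact: ltrans h (posp_ub y)|exact: posp_ge0]. Qed.
Lemma posp_labs x : le (posp x) (labs join x).
Proof. apply: jlub; [exact: labs_ub|exact: labs_ge0]. Qed.
Lemma pospN x : posp (- x) = join 0 x - x.
Proof. by rewrite /posp -joinD subrr add0r. Qed.
Lemma posp_dec x : x = posp x - posp (- x).
Proof. by rewrite pospN /posp joinC opprB addrC subrK. Qed.
Lemma posp_abs x : posp x + posp (- x) = labs join x.
Proof.
have e : posp x + posp (- x) = join (join 0 x) (posp (- x)).
  have h1 : join 0 x = posp (- x) + x by rewrite pospN subrK.
  rewrite h1; transitivity (join (x + posp (- x)) (0 + posp (- x))).
    by rewrite joinD.
  by rewrite addrC add0r.
rewrite e; apply: lanti.
  by apply: jlub; [apply: jlub|]; [exact: labs_ge0|exact: labs_ub|apply: jlub; [exact: labs_ubN|exact: labs_ge0]].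
apply: jlub.
  exact: ltrans (jub2 0 x) (jub1 _ _).
exact: ltrans (jub1 (- x) 0) (jub2 _ _).
Qed.

Lemma riesz v w1 w2 : le 0 v -> le 0 w1 -> le 0 w2 -> le v (w1 + w2) ->
  exists v1 v2, [/\ v = v1 + v2, le 0 v1, le v1 w1, le 0 v2 & le v2 w2].
Proof.
move=> hv h1 h2 hvw; exists (meet v w1), (v - meet v w1); split.
- by rewrite addrC subrK.
- exact: mglb.
- exact: mlb2.
- exact: lsub0 (mlb1 _ _).
rewrite meetE opprK addrC -joinD addNr; apply: jlub; first exact: h2.
apply: lsub0'; have := lsub0 hvw; congr (le 0 _).
by rewrite opprD opprK addrA [w2 + w1]addrC.
Qed.
Lemma lip_cont (V W : normedModType R) (g : V -> W) (M : R) : 0 <= M ->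
  (forall x y, `|g x - g y| <= M * `|x - y|) -> continuous g.
Proof.
move=> M0 H x; apply/cvgrPdist_lt => e e0; apply/nbhs_normP.
have M1 : 0 < M + 1 by rewrite ltr_wpDl.
exists (e / (M + 1)); first by rewrite /= divr_gt0.
move=> y /= hy; apply: (le_lt_trans (H x y)).
have : M * `|x - y| <= M * (e / (M + 1)) by rewrite ler_wpM2l // ltW.
move/le_lt_trans; apply.
by rewrite mulrA ltr_pdivrMr // mulrDr mulr1 mulrC ltrDl.
Qed.

Local Hint Resolve posp_ge0 lrefl labs_ge0 : core.
Lemma norm_mono v w : le 0 v -> le v w -> `|v| <= `|w|.
Proof.
move=> h0 h; apply: hnorm; rewrite labs_id // labs_id //; exact: ltrans h0 h.
Qed.
Lemma norm_posp x : `|posp x| <= `|x|.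
Proof. by apply: hnorm; rewrite labs_id; [apply: posp_labs|apply: posp_ge0]. Qed.

Section Fun.
Variable f : E -> R.
Hypothesis hf : cont_lin_functional f.

Lemma clfD x y : f (x + y) = f x + f y.
Proof. by case: hf => h _; rewrite -[x in f (x + _)]scale1r h mul1r. Qed.
Lemma clf0 : f 0 = 0.
Proof. have h := clfD 0 0; rewrite addr0 in h; by apply: (addrI (f 0)); rewrite addr0 -h. Qed.
Lemma clfZ a x : f (a *: x) = a * f x.
Proof. by case: hf => h _; rewrite -[a *: x]addr0 h clf0 addr0. Qed.
Lemma clfN x : f (- x) = - f x.
Proof. by rewrite -scaleN1r clfZ mulN1r. Qed.
Lemma clfB x y : f (x - y) = f x - f y.
Proof. by rewrite clfD clfN. Qed.

Lemma clf_bound : exists M, 0 < M /\ forall v, `|f v| <= M * `|v|.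
Proof.
case: hf => _ hc.
have := hc 0; move/cvgrPdist_lt => /(_ 1 ltr01) /nbhs_norm0P [e /= e0 He].
exists (2 / e); split; first by rewrite divr_gt0.
move=> v; have [->|v0] := eqVneq v 0; first by rewrite clf0 !normr0 mulr0.
have nv : 0 < `|v| by rewrite normr_gt0.
pose k := e / (2 * `|v|).
have k0 : 0 < k by rewrite divr_gt0 // mulr_gt0.
have := He (k *: v); rewrite /= clf0 sub0r normrN clfZ normrM gtr0_norm //.
rewrite normrZ gtr0_norm //.
have -> : k * `|v| = e / 2.
  by rewrite /k; field; rewrite gt_eqF.
move=> /(_ _) H; have {H} H := H ltac:(lra).
have hk : k * (2 / e * `|v|) = 1 by rewrite /k; field; rewrite !gt_eqF.
by rewrite -(ler_pM2l k0) hk ltW.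
Qed.

Definition Sset w : set R := fun r => exists v, [/\ le 0 v, le v w & r = f v].
Definition P w := sup (Sset w).

Lemma Sset_sup w : le 0 w -> has_sup (Sset w).
Proof.
move=> w0; have [M [M0 HM]] := clf_bound; split.
  by exists 0, 0; split; rewrite ?clf0 //; exact: lrefl.
exists (M * `|w|) => r [v [v0 vw ->]].
apply: le_trans (ler_norm _) _; apply: le_trans (HM v) _.
by apply: ler_wpM2l; [exact: ltW|exact: norm_mono].
Qed.
Lemma P_ub w v : le 0 v -> le v w -> f v <= P w.
Proof.
move=> v0 vw; have w0 := ltrans v0 vw.
have := sup_upper_bound (Sset_sup w w0); rewrite /ubound /=; apply. by exists v.
Qed.
Lemma P_le w c : le 0 w -> (forall v, le 0 v -> le v w -> f v <= c) -> P w <= c.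
Proof.
move=> w0 H; apply: ge_sup.
  by exists 0, 0; split; rewrite ?clf0 //; exact: lrefl.
by move=> r [v [v0 vw ->]]; apply: H.
Qed.
Lemma P_ge0 w : le 0 w -> 0 <= P w.
Proof. by move=> w0; rewrite -clf0; apply: P_ub => //; exact: lrefl. Qed.
Lemma P_ge w : le 0 w -> f w <= P w.
Proof. by move=> w0; apply: P_ub => //; exact: lrefl. Qed.
Lemma P_bound : exists M, 0 < M /\ forall w, le 0 w -> P w <= M * `|w|.
Proof.
have [M [M0 HM]] := clf_bound; exists M; split => // w w0.
apply: P_le => // v v0 vw; apply: le_trans (ler_norm _) _; apply: le_trans (HM v) _.
by apply: ler_wpM2l; [exact: ltW|exact: norm_mono].
Qed.
Lemma P_add w1 w2 : le 0 w1 -> le 0 w2 -> P (w1 + w2) = P w1 + P w2.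
Proof.
move=> h1 h2; have h12 : le 0 (w1 + w2) by rewrite -[0]addr0; exact: ladd2.
apply/eqP; rewrite eq_le; apply/andP; split.
  apply: P_le => // v v0 vw; have [v1 [v2 [-> a1 b1 a2 b2]]] := riesz _ _ _ v0 h1 h2 vw.
  by rewrite clfD; apply: lerD; apply: P_ub.
rewrite -lerBrDr; apply: P_le => // v1 a1 b1.
rewrite lerBrDr addrC -lerBrDr; apply: P_le => // v2 a2 b2.
rewrite lerBrDr addrC -clfD; apply: P_ub; first by rewrite -[0]addr0; exact: ladd2.
exact: ladd2.
Qed.
Lemma P0 : P 0 = 0.
Proof.
apply: le_anti; rewrite P_ge0 ?andbT; last exact: lrefl.
apply: P_le; first exact: lrefl.
by move=> v v0 v00; rewrite (lanti _ _ v00 v0) clf0.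
Qed.
Lemma P_scale a w : 0 <= a -> le 0 w -> P (a *: w) = a * P w.
Proof.
move=> a0 w0; have [->|an0] := eqVneq a 0.
  by rewrite scale0r mul0r P0.
have ap : 0 < a by rewrite lt_def an0.
have aw0 : le 0 (a *: w) by rewrite -(scaler0 _ a); exact: lscale.
apply/eqP; rewrite eq_le; apply/andP; split.
  apply: P_le => // v v0 vw.
  have -> : v = a *: (a^-1 *: v) by rewrite scalerA mulfV // scale1r.
  rewrite clfZ ler_wpM2l //; apply: P_ub.
    by rewrite -(scaler0 _ a^-1); apply: lscale => //; rewrite invr_ge0.
  have := lscale (a^-1) (ltW (_ : 0 < a^-1)) vw.
  by rewrite scalerA mulVf // scale1r; apply; rewrite invr_gt0.
rewrite -ler_pdivlMl //; apply: P_le => // v v0 vw.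
rewrite ler_pdivlMl // -clfZ; apply: P_ub.
  by rewrite -(scaler0 _ a); exact: lscale.
exact: lscale.
Qed.
Lemma P_mono v w : le 0 v -> le v w -> P v <= P w.
Proof.
move=> v0 vw; have d0 := lsub0 vw.
by rewrite -[w](subrK v) P_add // lerDr P_ge0.
Qed.

Definition H x := P (posp x) - P (posp (- x)).
Lemma H_diff p q : le 0 p -> le 0 q -> H (p - q) = P p - P q.
Proof.
move=> p0 q0; have e : posp (p - q) + q = p + posp (- (p - q)).
  set a := posp (p - q); set b := posp (- (p - q)).
  have d : p - q = a - b := posp_dec (p - q).
  have -> : p = (a - b) + q by rewrite -d subrK.
  by rewrite addrAC subrK.
have := congr1 P e; rewrite !P_add // /H => e'.
by lra.
Qed.
Lemma H_pos x : le 0 x -> H x = P x.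
Proof. by move=> x0; rewrite -[x]subr0 H_diff ?P0 ?subr0 //; exact: lrefl. Qed.
Lemma HD x y : H (x + y) = H x + H y.
Proof.
have -> : x + y = (posp x + posp y) - (posp (- x) + posp (- y)).
  by rewrite opprD addrACA -posp_dec -posp_dec.
rewrite H_diff; try by rewrite -[0]addr0; apply: ladd2; apply: posp_ge0.
rewrite !P_add ?posp_ge0 // /H; by rewrite opprD addrACA.
Qed.
Lemma HZ a x : H (a *: x) = a * H x.
Proof.
have [a0|a0] := leP 0 a.
  have -> : a *: x = a *: posp x - a *: posp (- x) by rewrite -scalerBr -posp_dec.
  rewrite H_diff; last 2 first.
  - by rewrite -(scaler0 _ a); apply: lscale => //; exact: posp_ge0.
  - by rewrite -(scaler0 _ a); apply: lscale => //; exact: posp_ge0.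
  by rewrite !P_scale ?posp_ge0 // /H mulrBr.
have a0' : 0 <= - a by rewrite oppr_ge0 ltW.
have -> : a *: x = (- a) *: posp (- x) - (- a) *: posp x.
  by rewrite !scaleNr opprK addrC -scalerBr -posp_dec.
rewrite H_diff; last 2 first.
- by rewrite -(scaler0 _ (- a)); apply: lscale => //; exact: posp_ge0.
- by rewrite -(scaler0 _ (- a)); apply: lscale => //; exact: posp_ge0.
by rewrite !P_scale ?posp_ge0 // /H mulNr mulNr opprK addrC mulrBr.
Qed.
Lemma H_clf : cont_lin_functional H.
Proof.
split; first by move=> a x y; rewrite HD HZ.
have [M [M0 HM]] := P_bound.
apply: (@lip_cont _ _ H (M *+ 2)); first by rewrite mulrn_wge0 // ltW.
move=> x y; have HN : H (- y) = - H y by have := HZ (-1) y; rewrite scaleN1r mulN1r.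
rewrite -HN -HD /H; apply: le_trans (ler_normB _ _) _.
rewrite ger0_norm ?P_ge0 ?posp_ge0 // ger0_norm ?P_ge0 ?posp_ge0 //.
rewrite mulr2n mulrDl; apply: lerD; apply: le_trans (HM _ (posp_ge0 _)) _;
  (apply: ler_wpM2l; first exact: ltW).
  exact: norm_posp.
by apply: le_trans (norm_posp _) _; rewrite normrN.
Qed.
End Fun.

Lemma RK f : cont_lin_functional f -> exists h, [/\ cont_lin_functional h,
  (forall v, le 0 v -> 0 <= h v) & (forall v, le 0 v -> f v <= h v)].
Proof.
move=> hf; exists (H f); split; first exact: H_clf.
  by move=> v v0; rewrite H_pos // P_ge0.
by move=> v v0; rewrite H_pos // P_ge.
Qed.
Lemma mulA x y z : mul (mul x y) z = mul x (mul y z). Proof. by case: hAM. Qed.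
Lemma mulDl x y z : mul (x + y) z = mul x z + mul y z. Proof. by case: hAM. Qed.
Lemma mulDr x y z : mul x (y + z) = mul x y + mul x z. Proof. by case: hAM. Qed.
Lemma mulZl (a : R) x y : mul (a *: x) y = a *: mul x y. Proof. by case: hAM. Qed.
Lemma mulZr (a : R) x y : mul x (a *: y) = a *: mul x y. Proof. by case: hAM. Qed.
Lemma mulNl x y : mul (- x) y = - mul x y.
Proof. by rewrite -scaleN1r mulZl scaleN1r. Qed.
Lemma mulNr x y : mul x (- y) = - mul x y.
Proof. by rewrite -scaleN1r mulZr scaleN1r. Qed.
Lemma mulBl x y z : mul (x - y) z = mul x z - mul y z.
Proof. by rewrite mulDl mulNl. Qed.
Lemma mulBr x y z : mul x (y - z) = mul x y - mul x z.
Proof. by rewrite mulDr mulNr. Qed.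

Lemma lge0D a b : le 0 a -> le 0 b -> le 0 (a + b).
Proof. by move=> ha hb; rewrite -[0]addr0; exact: ladd2. Qed.
Lemma lleDr a b c : le a b -> le 0 c -> le a (b + c).
Proof. by move=> h hc; rewrite -[a]addr0; exact: ladd2. Qed.
Lemma lleDl a b c : le a b -> le 0 c -> le a (c + b).
Proof. by move=> h hc; rewrite addrC; exact: lleDr. Qed.
Lemma mul_monor {a b v} : le a b -> le 0 v -> le (mul a v) (mul b v).
Proof. by move=> h hv; apply: lsub0'; rewrite -mulBl; apply: hmul0 => //; exact: lsub0. Qed.
Lemma mul_monol {c a b} : le 0 c -> le a b -> le (mul c a) (mul c b).
Proof. by move=> hc h; apply: lsub0'; rewrite -mulBr; apply: hmul0 => //; exact: lsub0. Qed.

Lemma labs_XY X Y : le 0 X -> le 0 Y -> le (labs join (X - Y)) (X + Y).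
Proof.
move=> hX hY; apply: labs_le.
  apply: (laddl X); apply: (ltrans (y := 0)) => //; by have := lopp hY; rewrite oppr0.
rewrite opprB [X + Y]addrC; apply: (laddl Y); apply: (ltrans (y := 0)) => //; by have := lopp hX; rewrite oppr0.
Qed.

Lemma labs_mul a b : le (labs join (mul a b)) (mul (labs join a) (labs join b)).
Proof.
rewrite -(posp_abs a) -(posp_abs b) {1}(posp_dec a) {1}(posp_dec b).
set p := posp a; set q := posp (- a); set r := posp b; set s := posp (- b).
have -> : mul (p - q) (r - s) = (mul p r + mul q s) - (mul p s + mul q r).
  by rewrite !mulBl !mulBr (opprB (mul q r)) addrACA (opprD (mul p s)).
have -> : mul (p + q) (r + s) = (mul p r + mul q s) + (mul p s + mul q r).
  by rewrite !mulDl !mulDr [mul q r + _]addrC addrACA.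
by apply: labs_XY; apply: lge0D; apply: hmul0; apply: posp_ge0.
Qed.
Section Nets.
Context {B : Type} {leB : B -> B -> Prop}.
Hypothesis hB : directed_set leB.

Lemma dir_inh : inhabited B. Proof. by case: hB. Qed.
Lemma dir_trans {a b c} : leB a b -> leB b c -> leB a c.
Proof. by case: hB => _ _ + _; apply. Qed.
Lemma dir_up a b : exists c, leB a c /\ leB b c.
Proof. by case: hB => _ _ _; apply. Qed.

Lemma net_add (t1 t2 : B -> R) : net_cvg_R leB t1 0 -> net_cvg_R leB t2 0 ->
  net_cvg_R leB (fun b => t1 b + t2 b) 0.
Proof.
move=> h1 h2 e e0; have e2 : 0 < e / 2 by rewrite divr_gt0.
have [b1 H1] := h1 _ e2; have [b2 H2] := h2 _ e2.
have [c [c1 c2]] := dir_up b1 b2; exists c => b cb.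
have := H1 b (dir_trans c1 cb); have := H2 b (dir_trans c2 cb).
rewrite !subr0 => k2 k1; apply: le_lt_trans (ler_normD _ _) _.
have -> : e = e / 2 + e / 2 by rewrite -splitr.
exact: ltrD.
Qed.

Lemma net_squeeze (s t : B -> R) :
  (exists b0, forall b, leB b0 b -> `|s b| <= t b) -> net_cvg_R leB t 0 ->
  net_cvg_R leB s 0.
Proof.
move=> [b0 Hb0] ht e e0; have [b1 H1] := ht _ e0.
have [c [c0 c1]] := dir_up b0 b1; exists c => b cb.
rewrite subr0; apply: le_lt_trans (Hb0 b (dir_trans c0 cb)) _.
have := H1 b (dir_trans c1 cb); rewrite subr0; apply: le_lt_trans; exact: ler_norm.
Qed.

Lemma net_zero (t : B -> R) : (forall b, t b = 0) -> net_cvg_R leB t 0.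
Proof.
move=> ht e e0; case: dir_inh => b0; exists b0 => b _; by rewrite ht subr0 normr0.
Qed.
End Nets.

Lemma prod_directed (A : Type) (leA : A -> A -> Prop) : directed_set leA ->
  directed_set (prod_le leA leA).
Proof.
move=> hA; split.
- by case: (dir_inh hA) => a; constructor; exact: (a, a).
- by move=> p; split; case: hA => _ + _ _; apply.
- rewrite /prod_le => p q r [h1 h2] [h3 h4]; split; [exact: (dir_trans hA h1 h3)|exact: (dir_trans hA h2 h4)].
move=> p q; have [c1 [h1 h2]] := dir_up hA p.1 q.1.
have [c2 [h3 h4]] := dir_up hA p.2 q.2.
by exists (c1, c2).
Qed.

Lemma net_fst (A : Type) (leA : A -> A -> Prop) (t : A -> R) l :
  inhabited A -> net_cvg_R leA t l ->
  net_cvg_R (prod_le leA leA) (fun p => t p.1) l.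
Proof.
move=> [b] ht e e0; have [a0 H] := ht _ e0; exists (a0, b) => p [hp _]; exact: H.
Qed.
Lemma net_snd (A : Type) (leA : A -> A -> Prop) (t : A -> R) l :
  inhabited A -> net_cvg_R leA t l ->
  net_cvg_R (prod_le leA leA) (fun p => t p.2) l.
Proof.
move=> [b] ht e e0; have [a0 H] := ht _ e0; exists (b, a0) => p [_ hp]; exact: H.
Qed.
Lemma clf_of (g : E -> R) : (forall (a : R) x y, g (a *: x + y) = a * g x + g y) ->
  (exists M, 0 <= M /\ forall x, `|g x| <= M * `|x|) -> cont_lin_functional g.
Proof.
move=> hl [M [M0 HM]]; split => //; apply: (@lip_cont _ _ g M M0) => x y.
have -> : g x - g y = g (x - y).
  by rewrite -[- y]scaleN1r [x + _]addrC hl mulN1r addrC.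
exact: HM.
Qed.
Lemma clf_opp (f : E -> R) : cont_lin_functional f -> cont_lin_functional (fun v => - f v).
Proof.
move=> hf; apply: clf_of.
  by move=> a x y; case: hf => hl _; rewrite hl opprD mulrN.
have [M [M0 HM]] := clf_bound _ hf; exists M; split; first exact: ltW.
by move=> x; rewrite normrN.
Qed.
Lemma clf_mul c (f : E -> R) : cont_lin_functional f -> cont_lin_functional (fun v => f (mul c v)).
Proof.
move=> hf; apply: clf_of.
  by move=> a x y; case: hf => hl _; rewrite mulDr mulZr hl.
have [M [M0 HM]] := clf_bound _ hf; exists (M * `|c|); split.
  by rewrite mulr_ge0 // ltW.
move=> x; apply: le_trans (HM _) _; rewrite -mulrA; apply: ler_wpM2l; first exact: ltW.
exact: hmulnorm.
Qed.
Lemma clf_pos_mono (h : E -> R) a b : cont_lin_functional h -> (forall w, le 0 w -> 0 <= h w) ->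
  le a b -> h a <= h b.
Proof. by move=> hh hp hab; rewrite -subr_ge0 -(clfB _ hh); apply: hp; exact: lsub0. Qed.

Definition wnull (B : Type) (leB : B -> B -> Prop) (z : B -> E) :=
  forall f, cont_lin_functional f -> net_cvg_R leB (fun b => f (z b)) 0.
Arguments wnull {B}.

Lemma wnull_add B (leB : B -> B -> Prop) z1 z2 : directed_set leB ->
  wnull leB z1 -> wnull leB z2 -> wnull leB (fun b => z1 b + z2 b).
Proof.
move=> hB h1 h2 f hf; under [fun b => _]funext => b do rewrite (clfD _ hf).
exact: net_add (h1 f hf) (h2 f hf).
Qed.
Lemma wnull_mull B (leB : B -> B -> Prop) c z :
  wnull leB z -> wnull leB (fun b => mul c (z b)).
Proof. by move=> h f hf; apply: (h (fun v => f (mul c v))); exact: clf_mul. Qed.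
Lemma wnull_fst A (leA : A -> A -> Prop) z : inhabited A -> wnull leA z ->
  wnull (prod_le leA leA) (fun p => z p.1).
Proof. by move=> hi h f hf; exact: (net_fst _ _ (fun a => f (z a)) 0 hi (h f hf)). Qed.
Lemma wnull_snd A (leA : A -> A -> Prop) z : inhabited A -> wnull leA z ->
  wnull (prod_le leA leA) (fun p => z p.2).
Proof. by move=> hi h f hf; exact: (net_snd _ _ (fun a => f (z a)) 0 hi (h f hf)). Qed.
Lemma wnull_zero B (leB : B -> B -> Prop) z : inhabited B ->
  (forall g, cont_lin_functional g -> forall b, g (z b) = 0) -> wnull leB z.
Proof.
move=> [b0] h f hf e e0; exists b0 => b _; by rewrite h // subr0 normr0.
Qed.
Lemma mw_wnull B (leB : B -> B -> Prop) zn z u :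
  mw_cvg le join mul leB zn z -> le 0 u ->
  wnull leB (fun b => mul (labs join (zn b - z)) u).
Proof. by move=> h u0 f hf; have := h u u0 f hf; rewrite (clf0 _ hf). Qed.
Arguments mw_wnull {B leB zn z u}.

Lemma split_fun (f : E -> R) w : cont_lin_functional f -> le 0 w ->
  (forall h, cont_lin_functional h -> (forall v, le 0 v -> 0 <= h v) -> h w = 0) ->
  f w = 0.
Proof.
move=> hf w0 H.
have [h1 [c1 p1 d1]] := RK _ hf.
have [h2 [c2 p2 d2]] := RK _ (clf_opp _ hf).
apply: le_anti; apply/andP; split.
  by rewrite -(H h1 c1 p1); exact: d1.
by rewrite -oppr_le0 -(H h2 c2 p2); exact: d2.
Qed.

Lemma wnull_dom B (leB : B -> B -> Prop) (w Z : B -> E) : directed_set leB ->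
  (exists b0, forall b, leB b0 b -> le 0 (w b) /\ le (w b) (Z b)) ->
  wnull leB Z -> wnull leB w.
Proof.
move=> hB [b0 Hb] hZ f hf.
have [h1 [c1 p1 d1]] := RK _ hf.
have [h2 [c2 p2 d2]] := RK _ (clf_opp _ hf).
apply: (net_squeeze hB (fun b => f (w b)) (fun b => h1 (Z b) + h2 (Z b))).
  exists b0 => b hb; have [w0 wZ] := Hb b hb.
  have k1 : f (w b) <= h1 (Z b).
    by apply: le_trans (d1 _ w0) _; exact: clf_pos_mono.
  have k2 : - f (w b) <= h2 (Z b).
    by apply: le_trans (d2 _ w0) _; exact: clf_pos_mono.
  have k3 : 0 <= h1 (Z b) by apply: le_trans (p1 _ w0) _; exact: clf_pos_mono.
  have k4 : 0 <= h2 (Z b) by apply: le_trans (p2 _ w0) _; exact: clf_pos_mono.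
  rewrite ler_norml; apply/andP; split; lra.
exact: (net_add hB _ _ (hZ _ c1) (hZ _ c2)).
Qed.

Lemma killed B (leB : B -> B -> Prop) (zn : B -> E) z (d : B -> E) :
  directed_set leB -> mw_cvg le join mul leB zn z ->
  (forall b, le 0 (d b)) ->
  (forall b b', leB b b' -> le (d b) (labs join (zn b' - z))) ->
  forall b v g, le 0 v -> cont_lin_functional g -> g (mul (d b) v) = 0.
Proof.
move=> hB hz d0 dle b v g v0 hg; apply: split_fun => //; first exact: hmul0.
move=> h hh hp; apply: le_anti; rewrite hp ?andbT; last exact: hmul0.
rewrite leNgt; apply/negP => hlt.
have [b1 Hb1] := mw_wnull hz v0 h hh _ hlt.
have [c [bc b1c]] := dir_up hB b b1.
have := Hb1 c b1c; rewrite subr0 => k.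
have k2 : h (mul (d b) v) <= h (mul (labs join (zn c - z)) v).
  apply: clf_pos_mono => //; apply: mul_monor => //; exact: dle.
have := le_lt_trans k2 (le_lt_trans (ler_norm _) k); by rewrite ltxx.
Qed.
Arguments wnull_add {B leB z1 z2}.
Arguments wnull_mull {B leB} c {z}.
Arguments wnull_fst {A leA z}.
Arguments wnull_snd {A leA z}.
Arguments wnull_zero {B leB z}.
Arguments wnull_dom {B leB w Z}.
Arguments killed {B leB zn z d}.
Arguments prod_directed {A leA}.
Lemma labs_bound (t t0 l d : E) : le 0 d ->
  (le t0 t /\ le (t - l) d) \/ (le t t0 /\ le (l - t) d) ->
  le (labs join t) (labs join t0 + labs join l + d).
Proof.
move=> d0 [[h1 h2]|[h1 h2]]; apply: labs_le.
- have -> : t = l + (t - l) by rewrite addrC subrK.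
  apply: ltrans (ladd2 (labs_ub l) h2) _; rewrite -addrA; apply: lleDl => //.
- apply: ltrans (lopp h1) _; apply: lleDr => //; apply: lleDr => //; exact: labs_ubN.
- apply: ltrans h1 _; apply: lleDr => //; apply: lleDr => //; exact: labs_ub.
- have -> : - t = - l + (l - t) by rewrite addrA addNr add0r.
  apply: ltrans (ladd2 (labs_ubN l) h2) _; rewrite -addrA; apply: lleDl => //.
Qed.

Lemma mono_data {B} {leB : B -> B -> Prop} (zn : B -> E) z b0 :
  net_monotone le leB zn ->
  exists d : B -> E, [/\ forall b, le 0 (d b),
    forall b b', leB b b' -> le (d b) (labs join (zn b' - z)) &
    forall b, leB b0 b -> le (labs join (zn b)) (labs join (zn b0) + labs join z + d b)].
Proof.
case=> [inc|dec].
  exists (fun b => posp (zn b - z)); split => //.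
    move=> b b' bb'; apply: ltrans (posp_labs _); apply: posp_mono.
    exact: laddr (inc _ _ bb').
  move=> b hb; apply: labs_bound => //; left; split; first exact: inc.
  exact: posp_ub.
exists (fun b => posp (z - zn b)); split => //.
  move=> b b' bb'; rewrite labsB; apply: ltrans (posp_labs _); apply: posp_mono.
  exact: laddl (lopp (dec _ _ bb')).
move=> b hb; apply: labs_bound => //; right; split; first exact: dec.
exact: posp_ub.
Qed.

Lemma main_lemma (A : Type) (leA : A -> A -> Prop) (hA : directed_set leA)
  (xn yn : A -> E) (x y : E)
  (hx : mw_cvg le join mul leA xn x)
  (hy : mw_cvg le join mul leA yn y)
  (hmon : net_monotone le leA xn \/ net_monotone le leA yn) :
  mw_cvg le join mul (prod_le leA leA)
    (fun p : A * A => mul (xn p.1) (yn p.2)) (mul x y).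
Proof.
move=> u u0 f hf; rewrite (clf0 _ hf).
suff: wnull (prod_le leA leA)
    (fun p => mul (labs join (mul (xn p.1) (yn p.2) - mul x y)) u) by apply.
have hP := prod_directed hA; have hi := dir_inh hA.
case: (hi) => a0.
have W0 : forall p : A * A, le 0 (mul (labs join (mul (xn p.1) (yn p.2) - mul x y)) u).
  by move=> p; apply: hmul0.
case: hmon => [hxm|hym].
- have [d [d0 dle dbd]] := mono_data xn x a0 hxm.
  apply: (wnull_dom hP (Z := fun p =>
     mul (labs join (xn a0)) (mul (labs join (yn p.2 - y)) u) +
     mul (labs join x) (mul (labs join (yn p.2 - y)) u) +
     mul (d p.1) (mul (labs join (yn p.2 - y)) u) +
     mul (labs join (xn p.1 - x)) (mul (labs join y) u))).
    exists (a0, a0) => p [hp1 _]; split => //.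
    have e : mul (xn p.1) (yn p.2) - mul x y =
        mul (xn p.1) (yn p.2 - y) + mul (xn p.1 - x) y.
      by rewrite mulBr mulBl addrA subrK.
    rewrite e.
    have k1 := ltrans (labs_tri (mul (xn p.1) (yn p.2 - y)) (mul (xn p.1 - x) y))
      (ladd2 (labs_mul _ _) (labs_mul _ _)).
    have k2 := ltrans k1 (laddr (mul (labs join (xn p.1 - x)) (labs join y))
       (mul_monor (dbd _ hp1) (labs_ge0 (yn p.2 - y)))).
    have := mul_monor k2 u0.
    move=> k3; apply: ltrans k3 _; rewrite mulDl !mulA !mulDl; exact: lrefl.
  apply: wnull_add => //; last first.
    exact: wnull_fst hi (mw_wnull hx (hmul0 _ _ (labs_ge0 y) u0)).
  apply: wnull_add => //.
    apply: wnull_add => //.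
      exact: (wnull_snd hi (wnull_mull (labs join (xn a0)) (mw_wnull hy u0))).
    exact: (wnull_snd hi (wnull_mull (labs join x) (mw_wnull hy u0))).
  apply: wnull_zero; first by constructor; exact: (a0, a0).
  move=> g hg p; apply: (killed hA hx d0 dle) => //.
  exact: hmul0.
- have [d [d0 dle dbd]] := mono_data yn y a0 hym.
  apply: (wnull_dom hP (Z := fun p =>
     mul (labs join (xn p.1 - x)) (mul (labs join (yn a0)) u) +
     mul (labs join (xn p.1 - x)) (mul (labs join y) u) +
     mul (labs join (xn p.1 - x)) (mul (d p.2) u) +
     mul (labs join x) (mul (labs join (yn p.2 - y)) u))).
    exists (a0, a0) => p [_ hp2]; split => //.
    have e : mul (xn p.1) (yn p.2) - mul x y =
        mul (xn p.1 - x) (yn p.2) + mul x (yn p.2 - y).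
      by rewrite mulBr mulBl addrA subrK.
    rewrite e.
    have k1 := ltrans (labs_tri (mul (xn p.1 - x) (yn p.2)) (mul x (yn p.2 - y)))
      (ladd2 (labs_mul _ _) (labs_mul _ _)).
    have k2 := ltrans k1 (laddr (mul (labs join x) (labs join (yn p.2 - y)))
       (mul_monol (labs_ge0 (xn p.1 - x)) (dbd _ hp2))).
    have := mul_monor k2 u0.
    move=> k3; apply: ltrans k3 _; rewrite mulDl !mulA !mulDl !mulDr; exact: lrefl.
  apply: wnull_add => //; last first.
    exact: (wnull_snd hi (wnull_mull (labs join x) (mw_wnull hy u0))).
  apply: wnull_add => //.
    apply: wnull_add => //.
      exact: (wnull_fst hi (mw_wnull hx (hmul0 _ _ (labs_ge0 (yn a0)) u0))).
    exact: (wnull_fst hi (mw_wnull hx (hmul0 _ _ (labs_ge0 y) u0))).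
  apply: wnull_zero; first by constructor; exact: (a0, a0).
  move=> g hg p; apply: (killed hA hy d0 dle p.2 u (fun v => g (mul (labs join (xn p.1 - x)) v))) => //.
  exact: clf_mul.
Qed.
End Main.

Theorem proposition2p7 (R : realType) (E : completeNormedModType R)
  (le : E -> E -> Prop) (join meet mul : E -> E -> E)
  (hE : banach_f_algebra le join meet mul)
  (A : Type) (leA : A -> A -> Prop) (hA : directed_set leA)
  (xn yn : A -> E) (x y : E)
  (hx : mw_cvg le join mul leA xn x)
  (hy : mw_cvg le join mul leA yn y)
  (hmon : net_monotone le leA xn \/ net_monotone le leA yn) :
  mw_cvg le join mul (prod_le leA leA)
    (fun p : A * A => mul (xn p.1) (yn p.2)) (mul x y).
Proof. exact: (@main_lemma R E le join meet mul hE A leA hA xn yn x y hx hy hmon). Qed.
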